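(* Let $\mathbf{b}=(b_n)_{n\in\mathbb{N}_0}$ be a $D$-sequence. Then $\frac{b_{n+1}}{b_n}\to\infty$ if and only if $b_j\to 0$ in $(\mathbb{Z},\tau_{\mathbf{b}})$.
   Context: $\mathbb{T}=\mathbb{R}/\mathbb{Z}$; $\mathbb{T}_m=[-\frac{1}{4m},\frac{1}{4m}]+\mathbb{Z}$. A $D$-sequence is a sequence $\mathbf{b}=(b_n)_{n\in\mathbb{N}_0}$ of natural numbers with $b_0=1$, $b_n\mid b_{n+1}$, $b_n\neq b_{n+1}$. $\tau_{\mathbf{b}}$ is the group topology on $\mathbb{Z}$ with neighborhood basis at $0$ given by $V_{\mathbf{b},m}=\{k\in\mathbb{Z}: \frac{k}{b_n}+\mathbb{Z}\in\mathbb{T}_m \text{ for all } n\in\mathbb{N}\}$, $m\in\mathbb{N}$. *)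

(* Defs.v *)
(* rationals model R/Z membership in T_m exactly. *)
From HB Require Import structures.
From mathcomp Require Import all_boot all_order all_algebra.
Set Implicit Arguments. Unset Strict Implicit. Unset Printing Implicit Defensive.
Import Order.TTheory GRing.Theory Num.Theory.
Local Open Scope ring_scope.

Definition D_sequence (b : nat -> nat) : Prop :=
  b 0%N = 1%N /\ (forall n, 0 < b n)%N /\
  (forall n, (b n %| b n.+1)%N) /\ (forall n, b n <> b n.+1).

(* x + Z lies in T_m = [-1/(4m), 1/(4m)] + Z *)
Definition in_Tm (m : nat) (x : rat) : Prop :=
  exists z : int, `|x - z%:~R| <= (4 * m)%:R^-1.

Definition V_b (b : nat -> nat) (m : nat) (k : int) : Prop :=
  forall n : nat, in_Tm m (k%:~R / (b n)%:R).

(* x_j -> 0 in (Z, tau_b): every basic neighbourhood V_{b,m} (m >= 1) of 0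
   eventually contains x_j. *)
Definition tau_b_converges_to_0 (b : nat -> nat) (x : nat -> int) : Prop :=
  forall m : nat, (0 < m)%N ->
    exists N : nat, forall j : nat, (N <= j)%N -> V_b b m (x j).

Definition ratio_to_infty (b : nat -> nat) : Prop :=
  forall M : nat, exists N : nat, forall n : nat, (N <= n)%N ->
    (M%:R <= (b n.+1)%:R / (b n)%:R :> rat).

(* Main.v *)
Require Import Defs.
From HB Require Import structures.
From mathcomp Require Import all_boot all_order all_algebra.
From mathcomp Require Import zify ring lra.
Import Order.TTheory GRing.Theory Num.Theory.

Local Open Scope ring_scope.

Lemma natdiv_ge (M a c : nat) : (0 < a)%N ->
  (M%:R <= c%:R / a%:R :> rat) = (M * a <= c)%N.
Proof.
move=> a0; rewrite ler_pdivlMr ?ltr0n // -natrM ler_nat //.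
Qed.

Lemma natdiv_le (k a c : nat) : (0 < c)%N -> (0 < k)%N ->
  (a%:R / c%:R <= k%:R^-1 :> rat) = (k * a <= c)%N.
Proof.
move=> c0 k0; rewrite ler_pdivrMr ?ltr0n // ler_pdivlMl ?ltr0n //.
by rewrite -natrM ler_nat.
Qed.

Lemma key (a c : nat) (z : int) : (0 < a)%N -> (2 * a <= c)%N ->
  a%:R / c%:R <= `|a%:R / c%:R - z%:~R| :> rat.
Proof.
move=> a0 ac.
have c0 : (0 < c)%N by lia.
have x0 : 0 <= a%:R / c%:R :> rat by rewrite divr_ge0 ?ler0n.
have x1 : a%:R / c%:R <= 2%:R^-1 :> rat by rewrite natdiv_le.
set x := a%:R / c%:R in x0 x1 *.
have h2 : (2%:R^-1 : rat) = 1/2 by rewrite div1r.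
rewrite h2 in x1.
rewrite ler_normr; apply/orP.
case: (lerP z 0) => hz.
  left; have : z%:~R <= 0 :> rat by rewrite lerz0.
  lra.
right; have : 1 <= z%:~R :> rat by rewrite ler1z.
lra.
Qed.

Lemma chain (b : nat -> nat) : (forall n, (b n %| b n.+1)%N) ->
  forall i j, (i <= j)%N -> (b i %| b j)%N.
Proof.
move=> H i j; elim: j => [|j IH].
  by rewrite leqn0 => /eqP ->.
rewrite leq_eqVlt => /orP [/eqP -> //|]; rewrite ltnS => /IH h.
exact: dvdn_trans h (H j).
Qed.

Lemma double (b : nat -> nat) : D_sequence b -> forall n, (2 * b n <= b n.+1)%N.
Proof.
move=> [_ [pos [dv ne]]] n.
have /dvdnP [k hk] := dv n.
have p := pos n.+1; have p' := pos n.
have := ne n; rewrite hk => hne.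
have k0 : k <> 0%N by move=> k0; rewrite k0 mul0n in hk; rewrite hk in p.
have k1 : k <> 1%N by move=> k1; apply: hne; rewrite k1 mul1n.
nia.
Qed.

Theorem corollary3p6 (b : nat -> nat) :
  D_sequence b ->
  (ratio_to_infty b <-> tau_b_converges_to_0 b (fun j => Posz (b j))).
Proof.
move=> D; have D' := D; case: D' => [b0 [pos [dv ne]]].
have dbl := @double b D.
split.
- move=> R m m0; have [N HN] := R (4 * m)%N.
  exists N => j jN n.
  have hj := HN j jN; rewrite natdiv_ge // in hj.
  case: (leqP n j) => nj.
    have /dvdnP [k hk] := @chain b dv _ _ nj.
    exists (Posz k); rewrite hk -!pmulrn (natrM _ k (b n)) mulfK; last by rewrite pnatr_eq0 -lt0n.
    by rewrite subrr normr0 invr_ge0 ler0n.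
  exists 0; rewrite subr0 ger0_norm ?divr_ge0 ?ler0n //.
  rewrite natdiv_le //; last by lia.
  have /dvdn_leq := @chain b dv _ _ nj; move/(_ (pos n)) => h.
  lia.
- move=> T M; have [N HN] := T (M.+1) isT.
  exists N => n nN; rewrite natdiv_ge //.
  have [z hz] := HN n nN n.+1.
  have hk := @key (b n) (b n.+1) z (pos n) (dbl n).
  have := le_trans hk hz.
  rewrite /= pmulrn natdiv_le //.
  lia.
Qed.
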